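(* The number $r(\eta,S)$ of visits to the root $\emptyset$ (over all time, by all frogs) in the frog model $(\eta,S)$ is a continuous icv statistic and a continuous pgf statistic.
   Context: Frog model: $G$ is a countable set of vertices with a distinguished root $\emptyset$. A frog model $(\eta,S)$ consists of counts $\eta(v)\in\{0,1,2,\dots\}$ for $v\neq\emptyset$ and paths $S_\cdot(v,i)=(S_j(v,i))_{j\geq0}$ in $G$ with $S_0(v,i)=v$ (including a path for the single frog at the root). Initially one active frog sits at $\emptyset$ and $\eta(v)$ sleeping frogs sit at each $v\neq\emptyset$; the $i$-th frog at $v$, from its activation time on, follows $S_\cdot(v,i)$ in discrete time; when an active frog visits a vertex with sleeping frogs, all of them activate. For a path $P_\cdot$ starting at a nonroot vertex, $\sigma_{P_\cdot}(\eta,S)$ is the model with one extra frog of path $P_\cdot$ added at $P_0$. For a statistic $f$ with values in $[0,\infty]$, $\Delta_{P_\cdot}f(\eta,S)=f(\sigma_{P_\cdot}(\eta,S))-f(\eta,S)$. $f$ is an icv statistic if for all $(\eta,S)$ and all paths $P^1_\cdot,\dots,P^m_\cdot$ starting at a common vertex: (i) for $m=1,2$, $(-1)^m\Delta_{P^1_\cdot}\cdots\Delta_{P^m_\cdot}f(\eta,S)\le0$ whenever all values $f(\sigma_{P^{u_1}_\cdot}\cdots\sigma_{P^{u_j}_\cdot}(\eta,S))$, $\{u_1,\dots,u_j\}\subseteq\{1,\dots,m\}$, are finite; (ii) $f(\eta,S)=\infty$ implies $f(\sigma_{P^1_\cdot}(\eta,S))=\infty$; (iii) $f(\sigma_{P^1_\cdot}\sigma_{P^2_\cdot}(\eta,S))=\infty$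 implies $f(\sigma_{P^i_\cdot}(\eta,S))=\infty$ for $i=1$ or $2$. $f$ is a pgf statistic if (ii),(iii) hold and (i) holds for all $m\ge1$. $f$ is continuous if $\eta_k(v)\nearrow\eta(v)$ for all $v$ implies $f(\eta_k,S)\nearrow f(\eta,S)$. *)

(* Defs.v *)
From HB Require Import structures.
From mathcomp Require Import all_boot all_order all_algebra.
From mathcomp Require Import all_classical all_reals all_analysis.
Set Implicit Arguments. Unset Strict Implicit. Unset Printing Implicit Defensive.
Import Order.TTheory GRing.Theory Num.Theory.
Local Open Scope classical_set_scope.
Local Open Scope ring_scope.
Local Open Scope ereal_scope.

(* A frog model on the vertex set V (a countable type) with root [root]:
   [fm_eta v]  = number of sleeping frogs at v (only meaningful for v <> root),
   [fm_S v i]  = path of the i-th frog at v (frogs indexed 0,1,...),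
   the single frog at the root has path [fm_S root 0]. *)
Record frog_model (V : Type) := FM {
  fm_eta : V -> nat;
  fm_S : V -> nat -> nat -> V }.

Section Frog.
Variables (V : countType) (root : V).

Definition valid_model (c : frog_model V) : Prop :=
  forall v i, fm_S c v i 0 = v.

Definition nfrogs (c : frog_model V) (v : V) : nat :=
  if v == root then 1%N else fm_eta c v.

(* Dynamics: a frog placed at v is activated at the first time an active frog
   visits v and from then on follows its path. *)
Inductive activated (c : frog_model V) : V -> Prop :=
| act_root : activated c root
| act_step u i k : activated c u -> (i < nfrogs c u)%N ->
                   activated c (fm_S c u i k).

(* Visits to the root over all time by all frogs: the triples (v,i,k) such
   that the i-th frog at v is ever activated and is at the root k steps after
   its activation. *)
Definition root_visits (c : frog_model V) : set (V * nat * nat) :=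
  [set x | activated c x.1.1 /\ (x.1.2 < nfrogs c x.1.1)%N /\
           fm_S c x.1.1 x.1.2 x.2 = root].

Definition r_stat (R : realType) (c : frog_model V) : \bar R :=
  (\esum_(x in root_visits c) (1%E : \bar R))%R.

Definition sigma (P : nat -> V) (c : frog_model V) : frog_model V :=
  FM (fun v => if v == P 0%N then (fm_eta c v).+1 else fm_eta c v)
     (fun v i => if (v == P 0%N) && (i == fm_eta c v) then P else fm_S c v i).

Definition Delta (R : realType) (P : nat -> V)
  (f : frog_model V -> \bar R) : frog_model V -> \bar R :=
  fun c => f (sigma P c) - f c.

Definition iterDelta (R : realType) (Ps : seq (nat -> V))
  (f : frog_model V -> \bar R) : frog_model V -> \bar R :=
  foldr (@Delta R) f Ps.

Definition sigmas (Ps : seq (nat -> V)) (c : frog_model V) : frog_model V :=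
  foldr sigma c Ps.

Definition common_start (Ps : seq (nat -> V)) : Prop :=
  exists v, v != root /\ all (fun P => P 0%N == v) Ps.

Definition cond_i (R : realType) (f : frog_model V -> \bar R) (m : nat) : Prop :=
  forall c Ps, valid_model c -> size Ps = m -> common_start Ps ->
    (forall b : bitseq, f (sigmas (mask b Ps) c) \is a fin_num) ->
    ((-1) ^+ m)%:E * iterDelta Ps f c <= 0.

Definition cond_ii (R : realType) (f : frog_model V -> \bar R) : Prop :=
  forall c P, valid_model c -> P 0%N != root ->
    f c = +oo -> f (sigma P c) = +oo.

Definition cond_iii (R : realType) (f : frog_model V -> \bar R) : Prop :=
  forall c P1 P2, valid_model c -> P1 0%N != root -> P2 0%N = P1 0%N ->
    f (sigma P1 (sigma P2 c)) = +oo ->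
    f (sigma P1 c) = +oo \/ f (sigma P2 c) = +oo.

Definition is_statistic (R : realType) (f : frog_model V -> \bar R) : Prop :=
  forall c, 0 <= f c.

Definition icv_stat (R : realType) (f : frog_model V -> \bar R) : Prop :=
  is_statistic f /\ cond_i f 1 /\ cond_i f 2 /\ cond_ii f /\ cond_iii f.

Definition pgf_stat (R : realType) (f : frog_model V -> \bar R) : Prop :=
  is_statistic f /\ (forall m, (0 < m)%N -> cond_i f m) /\ cond_ii f /\ cond_iii f.

Definition continuous_stat (R : realType) (f : frog_model V -> \bar R) : Prop :=
  forall (eta_ : nat -> V -> nat) (eta : V -> nat) (S : V -> nat -> nat -> V),
    valid_model (FM eta S) ->
    (forall v k, (eta_ k v <= eta_ k.+1 v)%N) ->
    (forall v, \forall k \near \oo, eta_ k v = eta v) ->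
    (forall k, f (FM (eta_ k) S) <= f (FM (eta_ k.+1) S)) /\
    (fun k => f (FM (eta_ k) S)) @ \oo --> f (FM eta S).

End Frog.

(* Main.v *)
Require Import Defs.
From HB Require Import structures.
From mathcomp Require Import all_boot all_order all_algebra.
From mathcomp Require Import all_classical all_reals all_analysis.
From mathcomp Require Import ring lra finmap.
Set Implicit Arguments. Unset Strict Implicit. Unset Printing Implicit Defensive.
Import Order.TTheory GRing.Theory Num.Theory.
Local Open Scope classical_set_scope.
Local Open Scope ring_scope.
Local Open Scope ereal_scope.

Section Frog1.
Variables (V : countType) (root : V).
Local Notation act := (activated root).
Local Notation nf := (nfrogs root).

Inductive reach (c : frog_model V) (Y : set V) : V -> Prop :=
| rbase y : Y y -> reach c Y y
| rstep u i k : reach c Y u -> (i < nf c u)%N -> reach c Y (fm_S c u i k).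

Lemma reach_act c Y x : (forall y, Y y -> act c y) -> reach c Y x -> act c x.
Proof. by move=> HY; elim=> [y /HY|u i k _ IH Hi]//; apply: act_step. Qed.

Section OneStep.
Variables (P : nat -> V) (c : frog_model V).
Hypothesis HP : P 0%N != root.

Lemma nf_sigma u : nf (sigma P c) u = if u == P 0%N then (nf c u).+1 else nf c u.
Proof.
rewrite /nfrogs /sigma /=; have [->|Nu] := eqVneq u (P 0%N).
  by rewrite (negbTE HP).
by [].  
Qed.

Lemma nf_new : nf c (P 0%N) = fm_eta c (P 0%N).
Proof. by rewrite /nfrogs (negbTE HP). Qed.

Lemma old_frog u i : (i < nf c u)%N ->
  (i < nf (sigma P c) u)%N /\ fm_S (sigma P c) u i = fm_S c u i.
Proof.
move=> Hi; rewrite nf_sigma /sigma /=; have [Eu|Nu] := eqVneq u (P 0%N); last by [].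
split; first by apply: ltnW.
move: Hi; rewrite Eu nf_new; have [->|] := eqVneq i (fm_eta c (P 0%N)); last by [].
by rewrite ltnn.
Qed.

Lemma frog_cases u i : (i < nf (sigma P c) u)%N ->
  (u = P 0%N /\ i = fm_eta c u) \/
  ((i < nf c u)%N /\ fm_S (sigma P c) u i = fm_S c u i).
Proof.
rewrite nf_sigma; have [Eu|Nu Hi] := eqVneq u (P 0%N); last first.
  by right; split => //; rewrite /sigma /= (negbTE Nu).
rewrite ltnS leq_eqVlt => /orP[/eqP Ei|Hi]; first by left; subst u; rewrite -nf_new.
by right; split => //; case: (old_frog Hi).
Qed.

Lemma S_new : fm_S (sigma P c) (P 0%N) (fm_eta c (P 0%N)) = P.
Proof. by rewrite /sigma /= !eqxx. Qed.

Lemma new_lt : (fm_eta c (P 0%N) < nf (sigma P c) (P 0%N))%N.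
Proof. by rewrite nf_sigma eqxx nf_new. Qed.

Lemma act_mono x : act c x -> act (sigma P c) x.
Proof.
elim=> [|u i k _ IH Hi]; first exact: act_root.
have [Hi' <-] := old_frog Hi; exact: act_step.
Qed.

Lemma reach_mono Y x : reach c Y x -> reach (sigma P c) Y x.
Proof.
elim=> [y Hy|u i k _ IH Hi]; first exact: rbase.
have [Hi' <-] := old_frog Hi; exact: rstep.
Qed.

Lemma act_sigma x : act (sigma P c) x <->
  act c x \/ (act c (P 0%N) /\ reach c (range P) x).
Proof.
split.
  elim=> [|u i k _ IH Hi]; first by left; apply: act_root.
  case: (frog_cases Hi) => [[Eu Ei]|[Hi' ->]].
    have Av : act c (P 0%N) by case: IH => [|[]//]; rewrite Eu.
    by right; split => //; subst u; rewrite Ei S_new; apply: rbase; exists k.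
  case: IH => [Au|[Av Ru]]; first by left; apply: act_step.
  by right; split => //; apply: rstep.
case=> [/act_mono //|[Av]].
elim=> [y [k _ <-]|u i k _ IH Hi].
  by have := @act_step V root (sigma P c) (P 0%N) _ k (act_mono Av) new_lt; rewrite S_new.
have [Hi' <-] := old_frog Hi; exact: act_step.
Qed.

Lemma reach_sigma Y x : act c (P 0%N) -> reach (sigma P c) Y x ->
  reach c Y x \/ act (sigma P c) x.
Proof.
move=> Av; elim=> [y Hy|u i k Ru IH Hi]; first by left; apply: rbase.
case: IH => [RYu|Au]; last by right; apply: act_step.
case: (frog_cases Hi) => [[Eu Ei]|[Hi' ->]]; last by left; apply: rstep.
right; apply: act_step => //; rewrite Eu; exact: act_mono.
Qed.

End OneStep.

Section Iter.
Variables (v : V) (c : frog_model V).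
Hypothesis Hv : v != root.

Definition starts (A : seq (nat -> V)) := all (fun P => P 0%N == v) A.

Fixpoint UD (A : seq (nat -> V)) : set V :=
  match A with [::] => set0 | Q :: A' => reach c (range Q) `|` UD A' end.

Lemma starts_cons P A : starts (P :: A) -> P 0%N = v /\ starts A.
Proof. by move=> /andP[/eqP]. Qed.

Lemma starts_nr P A : starts (P :: A) -> P 0%N != root.
Proof. by move=> /starts_cons[->]. Qed.

Lemma nf_sigmas A u : starts A -> u != v ->
  nf (sigmas A c) u = nf c u /\ fm_S (sigmas A c) u = fm_S c u.
Proof.
elim: A => [|P A IH] //= HA Nu.
have [HP0 HA'] := starts_cons HA; have [IH1 IH2] := IH HA' Nu.
have Nu' : (u == P 0%N) = false by rewrite HP0; apply/negbTE.
by rewrite (nf_sigma _ (starts_nr HA)) Nu' IH1; split => //; rewrite /sigma /= Nu' -IH2.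
Qed.

Lemma act_sigmas_mono A x : starts A -> act c x -> act (sigmas A c) x.
Proof.
elim: A => [|P A IH] //= HA Hx.
exact/act_mono/IH/Hx/(starts_cons HA).2/(starts_nr HA).
Qed.

Lemma reach_sigmas_mono A Y x : starts A -> reach c Y x -> reach (sigmas A c) Y x.
Proof.
elim: A => [|P A IH] //= HA Hx.
exact/reach_mono/IH/Hx/(starts_cons HA).2/(starts_nr HA).
Qed.

Lemma reach_sigmas A Y x : starts A -> act c v -> reach (sigmas A c) Y x ->
  reach c Y x \/ act (sigmas A c) x.
Proof.
elim: A x => [|P A IH] x /= HA Av; first by left.
have [HP0 HA'] := starts_cons HA; have HP := starts_nr HA.
move=> /(reach_sigma HP) [].
  by rewrite HP0; apply: act_sigmas_mono.
  by move=> /(IH _ HA' Av) [|/(act_mono HP)]; [left|right].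
by right.
Qed.

Lemma act_sigmas A x : starts A ->
  (act (sigmas A c) x <-> act c x \/ (act c v /\ UD A x)).
Proof.
elim: A x => [|P A IH] x /= HA.
  by split; [left|case=> // -[_ []]].
have [HP0 HA'] := starts_cons HA; have HP := starts_nr HA.
rewrite act_sigma // HP0 !IH //.
have Hv' : act (sigmas A c) v <-> act c v.
  by rewrite IH //; split => [[|[]]|]//; left.
split.
- case=> [[Ax|[Av Ux]]|[Av' Rx]]; first by left.
    by right; split => //; right.
  have Av : act c v by case: Av' => [|[]].
  case: (reach_sigmas HA' Av Rx) => [R1|].
    by right; split => //; left.
  by rewrite IH //; case=> [|[]]; [left|right; split => //; right].
- case=> [Ax|[Av [Rx|Ux]]]; first by left; left.
    right; split; [by left|exact: reach_sigmas_mono].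
  by left; right.
Qed.

End Iter.

Arguments sigma : simpl never.
Section Count.
Variable R : realType.
Local Notation T := (V * nat * nat)%type.

Definition h (A : set T) : \bar R := \esum_(x in A) (1%E : \bar R).

Lemma h_ge0 A : 0 <= h A.
Proof. by apply: esum_ge0 => x _. Qed.

Lemma h_split A B : h A = h (A `&` B) + h (A `&` ~` B).
Proof. by rewrite /h (esumID B). Qed.

Lemma h_ext A B : (forall x, A x <-> B x) -> h A = h B.
Proof. by move=> H; congr h; apply/seteqP; split => x /H. Qed.

Lemma h_le A B : A `<=` B -> h A <= h B.
Proof.
move=> AB; rewrite (h_split B A) (h_ext (A := B `&` A) (B := A)).
  exact/leeDl/h_ge0.
by move=> x; split => [[]|Ax]//; split => //; apply: AB.
Qed.

Lemma h3 X A B C : (forall x, X x <-> A x \/ B x \/ C x) ->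
  (forall x, A x -> ~ B x) -> (forall x, A x -> ~ C x) ->
  (forall x, B x -> ~ C x) -> h X = h A + h B + h C.
Proof.
move=> HX AB AC BC; rewrite (h_split X A) (h_split (X `&` ~` A) B) addeA.
congr (_ + _ + _); apply: h_ext => x; split.
- by case.
- by move=> Ax; split => //; apply/HX; left.
- by case=> -[].
- move=> Bx; split => //; split; first by apply/HX; right; left.
  by move=> /AB; apply.
- case=> -[/HX + NA NB]; by case=> [//|[//|]].
- move=> Cx; split; first split.
  + by apply/HX; right; right.
  + by move=> /AC; apply.
  + by move=> /BC; apply.
Qed.

Definition w (Q : Prop) (P : nat -> V) : \bar R :=
  \esum_(k in [set k | Q /\ P k = root]) (1%E : \bar R).

Lemma w_ge0 Q P : 0 <= w Q P.
Proof. by apply: esum_ge0. Qed.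

Definition rv c := root_visits root c.

Lemma r_h c : r_stat root R c = h (rv c).
Proof. by []. Qed.

Section OneStepCount.
Variables (P : nat -> V) (c : frog_model V).
Hypothesis HP : P 0%N != root.

Definition New : set T := [set x | act c (P 0%N) /\ x.1.1 = P 0%N /\
  x.1.2 = fm_eta c (P 0%N) /\ P x.2 = root].
Definition Ext : set T := [set x | act c (P 0%N) /\ ~ act c x.1.1 /\
  reach c (range P) x.1.1 /\ (x.1.2 < nf c x.1.1)%N /\ fm_S c x.1.1 x.1.2 x.2 = root].

Lemma rv_sigma x : rv (sigma P c) x <-> rv c x \/ New x \/ Ext x.
Proof.
case: x => [[u i] k]; rewrite /rv /root_visits /New /Ext /=; split.
- case=> Au [Hi HS]; case: (frog_cases HP Hi) => [[Eu Ei]|[Hi' ES]].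
    subst u; right; left; split; last by split => //; split => //; move: HS; rewrite Ei !eqxx.
    by case: (act_sigma c HP (P 0%N)) => /(_ Au) [|[]].
  have {}HS : fm_S c u i k = root by rewrite -ES; exact: HS.
  case: (act_sigma c HP u) => /(_ Au) [Au'|[Av Ru]]; first by left.
  have [Au'|NAu] := pselect (act c u); first by left.
  by right; right.
- case=> [[Au [Hi HS]]|[[Av [Eu [Ei HPk]]]|[Av [NAu [Ru [Hi HS]]]]]].
  + have [Hi' ES] := old_frog HP Hi; split; first exact: act_mono.
    by split => //; exact: (eq_trans (congr1 (fun f => f k) ES) HS).
  + subst u i; split; first exact: act_mono.
    by split; [exact: new_lt|rewrite !eqxx].
  + have [Hi' ES] := old_frog HP Hi; split; first by apply/(act_sigma c HP); right.
    by split => //; exact: (eq_trans (congr1 (fun f => f k) ES) HS).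
Qed.

Lemma rv_sigma_h : h (rv (sigma P c)) = h (rv c) + h New + h Ext.
Proof.
apply: h3; first exact: rv_sigma.
- case=> [[u i] k] [_ [Hi _]] [_ [/= Eu [Ei _]]]; subst u i.
  by move: Hi; rewrite nf_new // ltnn.
- by case=> [[u i] k] [Au _] [_ [/= + _]]; apply.
- by case=> [[u i] k] [Av [/= Eu _]] [_ [/= + _]]; rewrite Eu; apply.
Qed.

Lemma hNew : h New = w (act c (P 0%N)) P.
Proof.
rewrite /w; set S := [set k | _ /\ _].
have -> : New = (fun k => (P 0%N, fm_eta c (P 0%N), k)) @` S.
  apply/seteqP; split => -[[u i] k].
    by case=> Av [/= -> [/= -> Pk]]; exists k.
  by case=> k' [Av Pk] [<- <- <-].
by rewrite /h esum_image //; move=> a b _ _ [].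
Qed.

End OneStepCount.
End Count.
Section Arith.
Variable R : realType.
Lemma arith_base (a b x : \bar R) : a \is a fin_num -> b \is a fin_num -> x \is a fin_num ->
  a + b + x - a = b + ((-1) ^+ 0)%:E * x.
Proof.
move: a b x => [a| |] // [b| |] // [x| |] // _ _ _.
rewrite -EFinM -EFinN -!EFinD; congr EFin; rewrite expr0; ring.
Qed.
Lemma arith_step (a y z : \bar R) n : a \is a fin_num -> y \is a fin_num -> z \is a fin_num ->
  (a + ((-1)^+n)%:E * y) - (a + ((-1)^+n)%:E * (z + y)) = 0 + ((-1)^+n.+1)%:E * z.
Proof.
move: a y z => [a| |] // [y| |] // [z| |] // _ _ _.
rewrite add0e -!EFinD -!EFinM; congr EFin; rewrite exprS; ring.
Qed.
Lemma sign_fin (x : \bar R) n : 0 <= x -> x \is a fin_num -> ((-1)^+n.+1)%:E * (0 + ((-1)^+n)%:E * x) <= 0.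
Proof.
move: x => [x| |] // x0 _.
by rewrite add0e -!EFinM lee_fin exprS mulN1r mulNr mulrA -exprD addnn -mul2n exprM sqrrN expr1n expr1n mul1r oppr_le0; rewrite -lee_fin.
Qed.

Lemma sign_one (w x : \bar R) : 0 <= w -> 0 <= x -> ((-1)^+1)%:E * (w + ((-1)^+0)%:E * x) <= 0.
Proof. move=> w0 x0. rewrite expr1 expr0 mul1e mulN1e oppe_le0; exact: adde_ge0. Qed.
End Arith.


Section Base.
Variables (R : realType) (v : V) (c : frog_model V).
Hypothesis Hv : v != root.
Local Notation T := (V * nat * nat)%type.
Local Notation h := (@h R).
Local Notation w := (@w R).

Definition base : set T := [set x | act c v /\ ~ act c x.1.1 /\
  (x.1.2 < nf c x.1.1)%N /\ fm_S c x.1.1 x.1.2 x.2 = root].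
Definition E' (P : nat -> V) : set T := [set x | base x /\ reach c (range P) x.1.1].
Definition UE (A : seq (nat -> V)) : set T := [set x | base x /\ UD c A x.1.1].
Fixpoint IE (Ps : seq (nat -> V)) : set T :=
  match Ps with [::] => setT | Q :: Ps' => E' Q `&` IE Ps' end.
Definition g (A : seq (nat -> V)) := h (rv (sigmas A c)).

Lemma Ext_iter P A : starts v (P :: A) ->
  forall x, Ext P (sigmas A c) x <-> E' P x /\ ~ UE A x.
Proof.
move=> HA; have [HP0 HA'] := starts_cons HA.
case=> [[u i] k]; rewrite /Ext /E' /UE /base /= HP0; split.
- case=> Av' [NAu' [Ru' [Hi HS]]].
  have Av : act c v by case: ((act_sigmas c Hv v HA').1 Av') => // -[].
  have NAu : ~ act c u by move=> Au; apply: NAu'; apply: (act_sigmas_mono Hv HA').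
  have NUu : ~ UD c A u by move=> Uu; apply: NAu'; apply/(act_sigmas c Hv u HA'); right.
  have Nuv : u != v by apply/eqP => Euv; apply: NAu'; rewrite Euv.
  have [E1 E2] := nf_sigmas c Hv HA' Nuv.
  rewrite E1 E2 in Hi HS; split; last by case=> _.
  split => //; case: (reach_sigmas Hv HA' Av Ru') => // /NAu'.
- case=> -[[Av [NAu [Hi HS]]] Ru] NU.
  have NUu : ~ UD c A u by move=> Uu; apply: NU.
  have Nuv : u != v by apply/eqP => Euv; apply: NAu; rewrite Euv.
  have [E1 E2] := nf_sigmas c Hv HA' Nuv.
  split; first exact: (act_sigmas_mono Hv HA').
  split; first by move=> /(act_sigmas c Hv u HA') [|[]].
  by rewrite E1 E2; split => //; apply: (reach_sigmas_mono Hv HA').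
Qed.

Lemma g_step P A : starts v (P :: A) ->
  g (P :: A) = g A + w (act c v) P + h (E' P `&` ~` UE A).
Proof.
move=> HA; have [HP0 HA'] := starts_cons HA; have HP := starts_nr Hv HA.
rewrite /g /= rv_sigma_h // hNew HP0.
have -> : act (sigmas A c) v = act c v.
  apply: propext; rewrite (act_sigmas c Hv v HA'); split => [[|[]]|]//; by left.
by congr (_ + _ + _); apply: h_ext => x; rewrite Ext_iter.
Qed.

Definition good (P : nat -> V) := w (act c v) P \is a fin_num /\ h (E' P) \is a fin_num.
Fixpoint allgood (A : seq (nat -> V)) : Prop :=
  match A with [::] => True | P :: A' => good P /\ allgood A' end.

Lemma fin_sub S1 S2 : S1 `<=` S2 -> h S2 \is a fin_num -> h S1 \is a fin_num.
Proof. by move=> S12; rewrite !ge0_fin_numE ?h_ge0 //; apply/le_lt_trans/h_le. Qed.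

Lemma g_fin A : starts v A -> allgood A -> g [::] \is a fin_num -> g A \is a fin_num.
Proof.
elim: A => [|P A IH] // HA [[gw gE] gA] g0.
rewrite g_step // !fin_numD IH ?gw //=; last exact: (starts_cons HA).2.
by apply: fin_sub gE => x [].
Qed.

Lemma starts_app P A : starts v (P :: A) -> P 0%N = v.
Proof. by case/starts_cons. Qed.

Lemma key Ps P A : starts v (P :: Ps) -> starts v A -> allgood (P :: Ps) ->
  allgood A -> g [::] \is a fin_num ->
  iterDelta (P :: Ps) (r_stat root R) (sigmas A c) =
  (if Ps is [::] then w (act c v) P else 0) +
  ((-1) ^+ size Ps)%:E * h (E' P `&` IE Ps `&` ~` UE A).
Proof.
elim: Ps P A => [|Q Ps IH] P A HPs HA gPs gA g0.
  have HPA : starts v (P :: A) by apply/andP; split; [apply/eqP; exact: (starts_app HPs)|exact: HA].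
  have -> : iterDelta [:: P] (r_stat root R) (sigmas A c) = g (P :: A) - g A by [].
  rewrite g_step // setIT; apply: arith_base; first exact: g_fin.
    by case: gPs => -[].
  by apply: fin_sub (gPs.1.2) => x [].
have [HP0 HQs] := starts_cons HPs.
have HPA : starts v (P :: A) by apply/andP; split; [apply/eqP; exact: HP0|exact: HA].
have E : iterDelta [:: P, Q & Ps] (r_stat root R) (sigmas A c) =
  iterDelta (Q :: Ps) (r_stat root R) (sigmas (P :: A) c) -
  iterDelta (Q :: Ps) (r_stat root R) (sigmas A c) by [].
have gQs : allgood (Q :: Ps) by case: gPs.
have gPA : allgood (P :: A) by split => //; case: gPs.
rewrite E (IH Q (P :: A)) // (IH Q A) //.
set X := E' Q `&` IE Ps `&` ~` UE A.
have -> : h (E' Q `&` IE Ps `&` ~` UE (P :: A)) = h (X `&` ~` E' P).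
  apply: h_ext => x; rewrite /X /UE /E' /=; split.
    by move=> [[[B1 R1] I1] N]; split; [split; [by [] | move=> [B2 U2]; apply: N; split => //; right] | move=> [B2 R2]; apply: N; split => //; left].
  by move=> [[[[B1 R1] I1] N1] N2]; split => // -[B2 [R2|U2]]; [apply: N2|apply: N1].
have -> : h (E' P `&` IE (Q :: Ps) `&` ~` UE A) = h (X `&` E' P).
  apply: h_ext => x; rewrite /X /UE /E' /=; split.
    by move=> [[EP [EQ I1]] N]; split.
  by move=> [[[EQ I1] N] EP].
rewrite (@h_split R X (E' P)) /=.
have gQ : good Q by case: gQs.
apply: arith_step.
- by case: (Ps) => [|? ?] //; case: gQ.
- by apply: fin_sub (gQ.2) => x [[[]]].
- by apply: fin_sub (gQ.2) => x [[[]]].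
Qed.

Lemma starts1 P : P 0%N = v -> starts v [:: P].
Proof. by move=> HP; apply/andP; split => //; apply/eqP. Qed.

Lemma g1 P : P 0%N = v -> g [:: P] = g [::] + w (act c v) P + h (E' P).
Proof.
move=> HP; rewrite g_step ?starts1 //; congr (_ + _); apply: h_ext => x.
by split => [[]|Ex]//; split => // -[_ []].
Qed.

Lemma good1 P : P 0%N = v -> g [:: P] \is a fin_num -> good P.
Proof. by move=> HP; rewrite g1 // !fin_numD => /andP[/andP[_ Hw] HE]; split. Qed.

Lemma fin_good Ps : starts v Ps ->
  (forall b, r_stat root R (sigmas (mask b Ps) c) \is a fin_num) -> allgood Ps.
Proof.
elim: Ps => [|P Ps IH] //= HPs Hb; have [HP0 HPs'] := starts_cons HPs; split.
  by apply: good1 => //; exact: (Hb [:: true]).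
by apply: IH => // b; exact: (Hb (false :: b)).
Qed.

Lemma iD_sign Ps : (0 < size Ps)%N -> starts v Ps ->
  (forall b, r_stat root R (sigmas (mask b Ps) c) \is a fin_num) ->
  ((-1) ^+ size Ps)%:E * iterDelta Ps (r_stat root R) c <= 0.
Proof.
case: Ps => [|P Ps] // _ HPs Hb.
have gPs := fin_good HPs Hb.
have g0 : g [::] \is a fin_num by exact: (Hb [::]).
have := key (A := [::]) HPs isT gPs I g0; rewrite /= => ->.
case: Ps HPs Hb gPs => [|Q Ps] HPs Hb gPs.
  by apply: sign_one; [exact: w_ge0|exact: h_ge0].
apply: sign_fin; first exact: h_ge0.
by apply: fin_sub (gPs.1.2) => x [[]].
Qed.

Lemma g_ge P : P 0%N = v -> g [::] <= g [:: P].
Proof. by move=> HP; rewrite g1 //; apply: lee_paddr (h_ge0 _ _) (leeDl _ (w_ge0 _ _ _)). Qed.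
End Base.

Section Cont.
Variable R : realType.
Local Notation T := (V * nat * nat)%type.
Variables (eta_ : nat -> V -> nat) (eta : V -> nat) (S : V -> nat -> nat -> V).
Hypothesis Hmon : forall v k, (eta_ k v <= eta_ k.+1 v)%N.
Hypothesis Hev : forall v, \forall k \near \oo, eta_ k v = eta v.

Local Notation ck k := (FM (eta_ k) S).
Local Notation c0 := (FM eta S).

Lemma act_mono2 c1 c2 x : (forall u, (nf c1 u <= nf c2 u)%N) ->
  fm_S c1 = fm_S c2 -> act c1 x -> act c2 x.
Proof.
move=> Hn HS; elim=> [|u i k _ IH Hi]; first exact: act_root.
rewrite HS; apply: act_step => //; exact: leq_trans Hi (Hn u).
Qed.

Lemma rv_mono2 c1 c2 : (forall u, (nf c1 u <= nf c2 u)%N) ->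
  fm_S c1 = fm_S c2 -> rv c1 `<=` rv c2.
Proof.
move=> Hn HS [[u i] k] [Au [Hi HSk]]; split; first exact: act_mono2 Au.
by split; [exact: leq_trans Hi (Hn u)|rewrite -HS].
Qed.

Lemma nfFM e u : nf (FM e S) u = if u == root then 1%N else e u.
Proof. by []. Qed.

Lemma nf_le e1 e2 : (forall u, (e1 u <= e2 u)%N) ->
  forall u, (nf (FM e1 S) u <= nf (FM e2 S) u)%N.
Proof. by move=> H u; rewrite !nfFM; case: (u == root). Qed.

Lemma eta_mono k k' u : (k <= k')%N -> (eta_ k u <= eta_ k' u)%N.
Proof.
move=> /subnK <-; elim: (k' - k)%N => // n IH; rewrite addSn.
exact: leq_trans IH (Hmon _ _).
Qed.

Lemma ev u : exists N, forall k, (N <= k)%N -> eta_ k u = eta u.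
Proof. by have [N _ HN] := Hev u; exists N => k Hk; exact: HN. Qed.

Lemma eta_le k u : (eta_ k u <= eta u)%N.
Proof.
have [N HN] := ev u; rewrite -(HN (maxn k N)) ?leq_maxr //.
by apply: eta_mono; rewrite leq_maxl.
Qed.

Lemma rv_ck k k' : (k <= k')%N -> rv (ck k) `<=` rv (ck k').
Proof. by move=> Hk; apply: rv_mono2 => //; apply: nf_le => u; exact: eta_mono. Qed.

Lemma act_ev x : act c0 x -> exists K, act (ck K) x.
Proof.
elim=> [|u i k _ [K1 IH] Hi]; first by exists 0%N; exact: act_root.
have [N HN] := ev u; exists (maxn K1 N).
have A1 : act (ck (maxn K1 N)) u.
  by apply: act_mono2 IH => //; apply: nf_le => u'; apply: eta_mono; rewrite leq_maxl.
apply: (@act_step V root (ck (maxn K1 N)) u i k A1).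
by rewrite nfFM HN ?leq_maxr //; exact: Hi.
Qed.

Lemma rv_ev x : rv c0 x -> exists K, rv (ck K) x.
Proof.
case: x => [[u i] k] [Au [Hi HS]]; have [K1 A1] := act_ev Au.
have [N HN] := ev u; exists (maxn K1 N); split.
  by apply: act_mono2 A1 => //; apply: nf_le => u'; apply: eta_mono; rewrite leq_maxl.
by split => //; rewrite /= nfFM HN ?leq_maxr //; exact: Hi.
Qed.

Lemma fin_ev (F : set T) : finite_set F -> F `<=` rv c0 -> exists K, F `<=` rv (ck K).
Proof.
move=> /finite_fsetP [X ->] FX.
have gen : forall s : seq T, (forall x, x \in s -> [set` X] x) ->
    exists K, forall x, x \in s -> rv (ck K) x.
  elim=> [|y s IH] sX; first by exists 0%N.
  have [K1 H1] : exists K, forall x, x \in s -> rv (ck K) x.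
    by apply: IH => x Hx; apply: sX; rewrite inE Hx orbT.
  have [K2 H2] : exists K, rv (ck K) y.
    by apply: rv_ev; apply: FX; apply: sX; rewrite inE eqxx.
  exists (maxn K1 K2) => x; rewrite inE => /orP[/eqP ->|Hx].
    by apply: (rv_ck (leq_maxr K1 K2)).
  by apply: (rv_ck (leq_maxl K1 K2)); apply: H1.
have [K HK] := gen X (fun x h => h).
by exists K => x Hx; apply: HK.
Qed.

Lemma cont_r :
  (forall k, r_stat root R (ck k) <= r_stat root R (ck k.+1)) /\
  (fun k => r_stat root R (ck k)) @ \oo --> r_stat root R c0.
Proof.
split; first by move=> k; apply: h_le; apply: rv_ck.
set u := fun k => _.
have nd : nondecreasing_seq u by move=> n m Hnm; apply: h_le; apply: rv_ck.
suff -> : r_stat root R c0 = ereal_sup (range u) by exact: ereal_nondecreasing_cvgn.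
apply/eqP; rewrite eq_le; apply/andP; split.
  apply: ge_ereal_sup => _ [F [finF Fs] <-].
  have [K HK] := fin_ev finF Fs.
  apply: le_trans (_ : u K <= _); last by apply: ereal_sup_ubound; exists K.
  by apply: ereal_sup_ubound; exists F.
apply: ge_ereal_sup => _ [k _ <-]; apply: h_le; apply: rv_mono2 => //.
by apply: nf_le => u'; apply: eta_le.
Qed.

End Cont.
End Frog1.

Lemma fin_of_ne (R : realType) (x : \bar R) : 0 <= x -> x != +oo -> x \is a fin_num.
Proof. by move=> x0 Hx; rewrite ge0_fin_numE // lt_neqAle leey andbT. Qed.

Theorem proposition4 (R : realType) (V : countType) (root : V) :
  (continuous_stat (@r_stat V root R) /\ icv_stat root (@r_stat V root R)) /\
  (continuous_stat (@r_stat V root R) /\ pgf_stat root (@r_stat V root R)).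
Proof.
have cont : continuous_stat (@r_stat V root R).
  by move=> eta_ eta S _ Hmon Hev; exact: cont_r.
have stat : is_statistic (@r_stat V root R) by move=> c; exact: h_ge0.
have ci : forall m, (0 < m)%N -> cond_i root (@r_stat V root R) m.
  move=> m Hm c Ps _ HPs [v [Hv Hall]] Hb; subst m.
  exact: (@iD_sign V root R v c Hv Ps Hm Hall Hb).
have cii : cond_ii root (@r_stat V root R).
  move=> c P _ HP Hc; apply/eqP; rewrite -leye_eq -Hc.
  exact: (@g_ge V root R (P 0%N) c HP P erefl).
have ciii : cond_iii root (@r_stat V root R).
  move=> c P1 P2 _ HP1 HP21 H.
  have HA : starts (P1 0%N) [:: P1; P2] by rewrite /starts /= HP21 eqxx.
  have E := @g_step V root R (P1 0%N) c HP1 P1 [:: P2] HA.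
  have [H1|H1] := eqVneq (r_stat root R (sigma P1 c)) +oo; first by left.
  right; apply/eqP; apply: contraT => H2.
  have f2 := fin_of_ne (h_ge0 _ _) H2.
  have f1 := fin_of_ne (h_ge0 _ _) H1.
  have [gw gE] := @good1 V root R (P1 0%N) c HP1 P1 erefl f1.
  have : g root R c [:: P1; P2] \is a fin_num.
    rewrite E !fin_numD f2 gw /=.
    by apply: fin_sub gE => x [].
  have -> : g root R c [:: P1; P2] = r_stat root R (sigma P1 (sigma P2 c)) by [].
  by rewrite H.
split; split => //.
  by split => //; split; [exact: ci|split; [exact: ci|by split]].
Qed.
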